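(* $$\bigcup_{P\in S^n}\overline{\mathcal{H}_{\rm Wulff}(S^n,P)}=\overline{\mathcal{H}_{\mbox{s-conv}}(S^n)}.$$
   Context: $S^n$ is the unit sphere in $\mathbb{R}^{n+1}$, $n\ge1$; $|PQ|=\arccos(P\cdot Q)$. $H(P)=\{Q\in S^n:P\cdot Q\ge0\}$. $\mathcal{H}(S^n)$ is the set of non-empty closed subsets of $S^n$ with the Pompeiu-Hausdorff metric $h(A,B)=\max\{\max_{x\in A}\min_{y\in B}|xy|,\ \max_{y\in B}\min_{x\in A}|xy|\}$. A subset is hemispherical if it is disjoint from $H(Q)$ for some $Q\in S^n$. For $A,B$ in a hemispherical set, the arc $AB=\{((1-t)A+tB)/\|(1-t)A+tB\|:0\le t\le1\}$; a hemispherical set $W$ is spherical convex if $AB\subset W$ for all $A,B\in W$, and a spherical convex body if moreover it is closed and has an interior point. For $P\in S^n$, $\mathcal{H}_{\rm Wulff}(S^n,P)$ is the set of $W\in\mathcal{H}(S^n)$ with $W\cap H(-P)=\emptyset$, $P$ an interior point of $W$, and $W$ a spherical convex body. $\mathcal{H}_{\mbox{s-conv}}(S^n)$ is the set of non-empty closed spherical convex subsets of $S^n$. Overlines denote closures in $(\mathcal{H}(S^n),h)$. *)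

(* Defs.v *)
From Stdlib Require Import Reals.
Open Scope R_scope.

(* Points of R^{n+1} are represented as functions nat -> R; a point of S^n
   has all coordinates of index > n equal to 0, so the representation is
   canonical. *)
Definition point := nat -> R.

Definition dot (n : nat) (P Q : point) : R := sum_f_R0 (fun i => P i * Q i) n.

Definition on_sphere (n : nat) (P : point) : Prop :=
  dot n P P = 1 /\ forall i, (n < i)%nat -> P i = 0.

Definition sdist (n : nat) (P Q : point) : R := acos (dot n P Q).

Definition pset := point -> Prop.

Definition Hhalf (n : nat) (P : point) : pset :=
  fun Q => on_sphere n Q /\ dot n P Q >= 0.

Definition opp (P : point) : point := fun i => - P i.

Definition closed_sub (n : nat) (A : pset) : Prop :=
  (forall x, A x -> on_sphere n x) /\
  forall x, on_sphere n x ->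
    (forall eps, eps > 0 -> exists y, A y /\ sdist n x y < eps) -> A x.

Definition in_HS (n : nat) (A : pset) : Prop :=
  (exists x, A x) /\ closed_sub n A.

(* Pompeiu-Hausdorff metric, relationally: h n A B r  <->  h(A,B) = r *)
Definition is_max (S : R -> Prop) (r : R) : Prop :=
  S r /\ forall s, S s -> s <= r.
Definition is_min (S : R -> Prop) (r : R) : Prop :=
  S r /\ forall s, S s -> r <= s.
Definition pt_set_min (n : nat) (x : point) (B : pset) (d : R) : Prop :=
  is_min (fun s => exists y, B y /\ s = sdist n x y) d.
Definition hdist (n : nat) (A B : pset) (r : R) : Prop :=
  exists r1 r2,
    is_max (fun s => exists x, A x /\ pt_set_min n x B s) r1 /\
    is_max (fun s => exists y, B y /\ pt_set_min n y A s) r2 /\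
    r = Rmax r1 r2.

Definition hemispherical (n : nat) (W : pset) : Prop :=
  exists Q, on_sphere n Q /\ forall x, W x -> ~ Hhalf n Q x.

Definition vnorm (n : nat) (v : point) : R := sqrt (dot n v v).

Definition arc (n : nat) (A B : point) : pset :=
  fun X => exists t, 0 <= t <= 1 /\
    X = (fun i => ((1 - t) * A i + t * B i) /
                  vnorm n (fun j => (1 - t) * A j + t * B j)).

Definition s_convex (n : nat) (W : pset) : Prop :=
  hemispherical n W /\ forall A B, W A -> W B -> forall X, arc n A B X -> W X.

Definition interior_point (n : nat) (W : pset) (P : point) : Prop :=
  W P /\ exists eps, eps > 0 /\
    forall Q, on_sphere n Q -> sdist n P Q < eps -> W Q.

Definition s_convex_body (n : nat) (W : pset) : Prop :=
  s_convex n W /\ closed_sub n W /\ exists P, interior_point n W P.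

Definition H_Wulff (n : nat) (P : point) (W : pset) : Prop :=
  in_HS n W /\ (forall x, W x -> ~ Hhalf n (opp P) x) /\
  interior_point n W P /\ s_convex_body n W.

Definition H_sconv (n : nat) (W : pset) : Prop :=
  (exists x, W x) /\ closed_sub n W /\ s_convex n W.

Definition hclosure (n : nat) (F : pset -> Prop) (W : pset) : Prop :=
  in_HS n W /\
  forall eps, eps > 0 -> exists V r, F V /\ hdist n V W r /\ r < eps.

(* Main.v *)
Require Import Defs.
From Stdlib Require Import Reals Lra Lia Psatz ClassicalEpsilon Classical FunctionalExtensionality.
Open Scope R_scope.

Lemma dot_ext n u u' v v' : (forall i, (i <= n)%nat -> u i = u' i /\ v i = v' i) ->
  dot n u v = dot n u' v'.
Proof.
  unfold dot; induction n as [|n IH]; intros H; simpl.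
  - destruct (H 0%nat) as [-> ->]; lia || reflexivity.
  - rewrite IH by (intros i Hi; apply H; lia). destruct (H (S n)) as [-> ->]; auto.
Qed.

Lemma dot_sym n u v : dot n u v = dot n v u.
Proof. unfold dot; induction n; simpl; [ring| rewrite IHn; ring]. Qed.

Lemma dot_lin n a b u v w :
  dot n (fun i => a * u i + b * v i) w = a * dot n u w + b * dot n v w.
Proof. unfold dot; induction n; simpl; [ring| rewrite IHn; ring]. Qed.

Lemma dot_lin_r n a b u v w :
  dot n w (fun i => a * u i + b * v i) = a * dot n w u + b * dot n w v.
Proof. rewrite dot_sym, dot_lin, (dot_sym n u), (dot_sym n v); ring. Qed.

Lemma dot_nonneg n u : 0 <= dot n u u.
Proof. unfold dot; induction n; simpl; nra. Qed.

Lemma dot_sub_l n u v w : dot n (fun i => u i - v i) w = dot n u w - dot n v w.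
Proof. unfold dot; induction n; simpl; [ring| rewrite IHn; ring]. Qed.
Lemma dot_sub_r n u v w : dot n w (fun i => u i - v i) = dot n w u - dot n w v.
Proof. rewrite dot_sym, dot_sub_l, (dot_sym n u), (dot_sym n v); ring. Qed.
Lemma dot_add_l n u v w : dot n (fun i => u i + v i) w = dot n u w + dot n v w.
Proof. unfold dot; induction n; simpl; [ring| rewrite IHn; ring]. Qed.
Lemma dot_scal_l n a u w : dot n (fun i => a * u i) w = a * dot n u w.
Proof. unfold dot; induction n; simpl; [ring| rewrite IHn; ring]. Qed.
Lemma dot_scal_r n a u w : dot n w (fun i => a * u i) = a * dot n w u.
Proof. rewrite dot_sym, dot_scal_l, dot_sym; ring. Qed.
Lemma dot_opp_l n u w : dot n (opp u) w = - dot n u w.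
Proof. unfold dot, opp; induction n; simpl; [ring| rewrite IHn; ring]. Qed.

Lemma cauchy_schwarz n u v : (dot n u v)^2 <= dot n u u * dot n v v.
Proof.
  destruct (Req_dec (dot n v v) 0) as [H0|H0].
  -
    assert (forall t, 0 <= dot n u u - 2 * t * dot n u v) as Ht.
    { intro t. pose proof (dot_nonneg n (fun i => u i - t * v i)) as P.
      replace (fun i => u i - t * v i) with (fun i => 1 * u i + (- t) * v i) in P
        by (apply functional_extensionality; intro; ring).
      rewrite dot_lin, !dot_lin_r, (dot_sym n v u), H0 in P. nra. }
    assert (dot n u v = 0).
    { destruct (Req_dec (dot n u v) 0) as [?|Hn]; auto.
      specialize (Ht ((dot n u u + 1) / (2 * dot n u v))).
      field_simplify in Ht; auto. pose proof (dot_nonneg n u). lra. }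
    rewrite H, H0; lra.
  - pose proof (dot_nonneg n v) as Hv.
    set (t := dot n u v / dot n v v).
    pose proof (dot_nonneg n (fun i => 1 * u i + (- t) * v i)) as P.
    rewrite dot_lin, !dot_lin_r, (dot_sym n v u) in P.
    assert (0 < dot n v v) by lra.
    assert (E: 1 * (1 * dot n u u + - t * dot n u v) + - t * (1 * dot n u v + - t * dot n v v)
       = dot n u u - dot n u v ^ 2 / dot n v v) by (unfold t; field; lra).
    rewrite E in P.
    assert (0 <= dot n u u * dot n v v - dot n u v ^ 2).
    { replace (dot n u u * dot n v v - dot n u v ^ 2) with
        ((dot n u u - dot n u v ^ 2 / dot n v v) * dot n v v) by (field; lra). nra. }
    lra.
Qed.

Definition nrm n u := sqrt (dot n u u).
Definition vsub (u v : point) : point := fun i => u i - v i.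

Lemma nrm_nonneg n u : 0 <= nrm n u.
Proof. apply sqrt_pos. Qed.
Lemma nrm_sq n u : nrm n u * nrm n u = dot n u u.
Proof. apply sqrt_sqrt, dot_nonneg. Qed.

Lemma abs_dot_le n u v : Rabs (dot n u v) <= nrm n u * nrm n v.
Proof.
  pose proof (cauchy_schwarz n u v). pose proof (nrm_sq n u). pose proof (nrm_sq n v).
  pose proof (nrm_nonneg n u). pose proof (nrm_nonneg n v).
  apply Rsqr_incr_0_var; [|nra]. unfold Rsqr. rewrite <- Rabs_mult, Rabs_right by nra. nra.
Qed.

Lemma dot_le_nrm n u v : dot n u v <= nrm n u * nrm n v.
Proof. pose proof (abs_dot_le n u v). pose proof (Rle_abs (dot n u v)). lra. Qed.
Lemma dot_ge_nrm n u v : - (nrm n u * nrm n v) <= dot n u v.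
Proof. pose proof (abs_dot_le n u v). pose proof (Rabs_Ropp (dot n u v)). pose proof (Rle_abs (- dot n u v)). lra. Qed.

Lemma nrm_le_sq n u c : 0 <= c -> dot n u u <= c * c -> nrm n u <= c.
Proof. intros. unfold nrm. rewrite <- (sqrt_square c) by auto. apply sqrt_le_1_alt; auto. Qed.
Lemma nrm_lt_sq n u c : 0 <= c -> dot n u u < c * c -> nrm n u < c.
Proof. intros. unfold nrm. rewrite <- (sqrt_square c) by auto. apply sqrt_lt_1_alt; split; auto. apply dot_nonneg. Qed.

Lemma nrm_triangle n u v : nrm n (fun i => u i + v i) <= nrm n u + nrm n v.
Proof.
  apply nrm_le_sq. pose proof (nrm_nonneg n u); pose proof (nrm_nonneg n v); lra.
  rewrite dot_add_l, !(dot_sym n _ (fun i => u i + v i)), !dot_add_l.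
  pose proof (nrm_sq n u); pose proof (nrm_sq n v). pose proof (dot_le_nrm n u v).
  rewrite (dot_sym n v u). nra.
Qed.

Lemma nrm_scal n a u : nrm n (fun i => a * u i) = Rabs a * nrm n u.
Proof.
  unfold nrm. rewrite dot_scal_l, dot_scal_r.
  replace (a * (a * dot n u u)) with (Rsqr a * dot n u u) by (unfold Rsqr; ring).
  rewrite sqrt_mult_alt by apply Rle_0_sqr. rewrite sqrt_Rsqr_abs. auto.
Qed.

Lemma nrm_ext n u v : (forall i, (i <= n)%nat -> u i = v i) -> nrm n u = nrm n v.
Proof. intros H. unfold nrm. f_equal. apply dot_ext. intros; split; auto. Qed.

Lemma sph_dot_bound n x y : on_sphere n x -> on_sphere n y -> -1 <= dot n x y <= 1.
Proof.
  intros [Hx _] [Hy _]. pose proof (cauchy_schwarz n x y). rewrite Hx, Hy in H. nra.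
Qed.

Lemma chord_sq n x y : on_sphere n x -> on_sphere n y ->
  dot n (vsub x y) (vsub x y) = 2 - 2 * dot n x y.
Proof.
  intros [Hx _] [Hy _]. unfold vsub. rewrite dot_sub_l, !dot_sub_r, Hx, Hy, (dot_sym n y x). ring.
Qed.

Lemma acos_le_mono a b : -1 <= a -> a <= b -> b <= 1 -> acos b <= acos a.
Proof.
  intros. destruct (Req_dec a b) as [->|Hne]; [lra|].
  destruct (Rle_lt_dec (acos b) (acos a)) as [|Hl]; auto.
  pose proof (acos_bound a); pose proof (acos_bound b).
  assert (Hc: cos (acos b) < cos (acos a)) by (apply cos_decreasing_1; lra).
  rewrite !cos_acos in Hc by lra. lra.
Qed.
Lemma acos_lt_mono a b : -1 <= a -> a < b -> b <= 1 -> acos b < acos a.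
Proof.
  intros. destruct (Req_dec (acos a) (acos b)) as [E|Hne].
  - apply (f_equal cos) in E. rewrite !cos_acos in E by lra. lra.
  - assert (acos b <= acos a) by (apply acos_le_mono; lra). lra.
Qed.
Lemma acos_1 : acos 1 = 0.
Proof. rewrite <- cos_0. apply acos_cos. pose proof PI_RGT_0. lra. Qed.

Lemma acos_lt_inv a b : -1 <= a <= 1 -> -1 <= b <= 1 -> acos a < acos b -> b < a.
Proof. intros. destruct (Rlt_le_dec b a); auto. assert (acos b <= acos a) by (apply acos_le_mono; lra). lra. Qed.

Lemma acos_pos_lt1 a : -1 <= a < 1 -> 0 < acos a.
Proof. intros. rewrite <- acos_1. apply acos_lt_mono; lra. Qed.

Lemma PI_gt_1 : 1 < PI.
Proof. pose proof PI2_1. lra. Qed.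

Lemma near1 eps : 0 < eps -> exists c, 0 < c < 1 /\ acos c < eps /\
  forall d, -1 <= d <= 1 -> c <= d -> acos d < eps.
Proof.
  intros. set (e := Rmin eps 1 / 2).
  assert (0 < e <= 1/2) by (unfold e; unfold Rmin; destruct Rle_dec; lra).
  pose proof PI_gt_1. pose proof PI2_1.
  assert (Hc: acos (cos e) = e) by (apply acos_cos; lra).
  assert (0 < cos e) by (apply cos_gt_0; lra).
  pose proof (COS_bound e) as [_ Hc1].
  assert (cos e <> 1) by (intro E; rewrite E, acos_1 in Hc; lra).
  assert (e < eps) by (unfold e; unfold Rmin; destruct Rle_dec; lra).
  assert (cos e < 1) by (destruct (Rle_lt_or_eq_dec _ _ Hc1); auto; tauto).
  exists (cos e). split; [split; lra|]. split; [lra|].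
  intros d Hd Hcd. assert (acos d <= acos (cos e)) by (apply acos_le_mono; lra). lra.
Qed.

Definition incr (phi : nat -> nat) := forall k, (phi k < phi (S k))%nat.

Lemma incr_ge phi : incr phi -> forall k, (k <= phi k)%nat.
Proof. intros H k; induction k; [lia|]. specialize (H k); lia. Qed.
Lemma incr_mono phi : incr phi -> forall a b, (a <= b)%nat -> (phi a <= phi b)%nat.
Proof. intros H a b Hab; induction Hab; [lia|]. specialize (H m); lia. Qed.

Lemma cv_sub (a : nat -> R) l phi : incr phi -> Un_cv a l -> Un_cv (fun k => a (phi k)) l.
Proof.
  intros Hp Hc eps He. destruct (Hc eps He) as [N HN]. exists N. intros k Hk.
  apply HN. pose proof (incr_ge phi Hp k). lia.
Qed.

Lemma BW1 (u : nat -> R) : (forall k, Rabs (u k) <= 1) ->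
  exists phi l, incr phi /\ Un_cv (fun k => u (phi k)) l.
Proof.
  intros Hb.
  destruct (Bolzano_Weierstrass u (fun c => -1 <= c <= 1) (compact_P3 (-1) 1)) as [l Hl].
  { intro k. specialize (Hb k). revert Hb; unfold Rabs; destruct Rcase_abs; intros; split; lra. }
  assert (Hp: forall N m : nat, exists p, (N <= p)%nat /\ Rabs (u p - l) < / (INR m + 1)).
  { intros N m. assert (Hpos: 0 < / (INR m + 1)) by (apply Rinv_0_lt_compat; pose proof (pos_INR m); lra).
    destruct (Hl (disc l (mkposreal _ Hpos)) N) as [p [Hp1 Hp2]].
    - exists (mkposreal _ Hpos). intros y Hy; exact Hy.
    - exists p; split; auto. }
  set (g := fun N m => proj1_sig (constructive_indefinite_description _ (Hp N m))).
  assert (Hg: forall N m, (N <= g N m)%nat /\ Rabs (u (g N m) - l) < / (INR m + 1)).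
  { intros N m. unfold g. destruct constructive_indefinite_description; simpl; auto. }
  set (phi := fix phi k := match k with O => g O O | S k' => g (S (phi k')) k end).
  exists phi, l. split.
  - intro k. simpl. destruct (Hg (S (phi k)) (S k)). lia.
  - intros eps He. destruct (archimed_cor1 eps He) as [N [HN HN0]]. exists N.
    intros k Hk. unfold R_dist.
    assert (Rabs (u (phi k) - l) < / (INR k + 1)).
    { destruct k; simpl; [apply (Hg 0%nat 0%nat)| apply Hg]. }
    assert (/ (INR k + 1) <= / INR N).
    { apply Rinv_le_contravar. apply lt_0_INR; lia. apply le_INR in Hk. lra. }
    lra.
Qed.

Lemma BWd (d : nat) (x : nat -> point) : (forall k i, Rabs (x k i) <= 1) ->
  exists phi L, incr phi /\ forall i, (i < d)%nat -> Un_cv (fun k => x (phi k) i) (L i).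
Proof.
  intros Hb. induction d as [|d IH].
  - exists (fun k => k), (fun _ => 0). split; [intro; lia| intros; lia].
  - destruct IH as [phi [L [Hphi HL]]].
    destruct (BW1 (fun k => x (phi k) d)) as [psi [l [Hpsi Hl]]]; [intro; apply Hb|].
    exists (fun k => phi (psi k)), (fun i => if Nat.eq_dec i d then l else L i).
    split.
    + intro k. pose proof (incr_mono phi Hphi (S (psi k)) (psi (S k)) (Hpsi k)).
      specialize (Hphi (psi k)). lia.
    + intros i Hi. destruct (Nat.eq_dec i d) as [->|Hne]; [exact Hl|].
      apply (cv_sub (fun k => x (phi k) i)); auto. apply HL; lia.
Qed.

Lemma dot_cv n (a b : nat -> point) (A B : point) :
  (forall i, (i <= n)%nat -> Un_cv (fun k => a k i) (A i) /\ Un_cv (fun k => b k i) (B i)) ->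
  Un_cv (fun k => dot n (a k) (b k)) (dot n A B).
Proof.
  unfold dot; induction n as [|n IH]; intros H; simpl.
  - destruct (H 0%nat) as [H1 H2]; [lia|]. apply CV_mult; auto.
  - apply CV_plus. apply IH; intros; apply H; lia.
    destruct (H (S n)) as [H1 H2]; [lia|]. apply CV_mult; auto.
Qed.

Lemma coord_sq_le n x i : (i <= n)%nat -> (x i)^2 <= dot n x x.
Proof.
  unfold dot; induction n as [|n IH]; intros Hi; simpl.
  - assert (i = 0%nat) by lia; subst; nra.
  - destruct (Nat.eq_dec i (S n)) as [->|Hne].
    + pose proof (dot_nonneg n x); unfold dot in H; nra.
    + specialize (IH ltac:(lia)). nra.
Qed.

Lemma sph_coord_bound n x i : on_sphere n x -> Rabs (x i) <= 1.
Proof.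
  intros [H1 H2]. destruct (Compare_dec.le_lt_dec i n) as [Hi|Hi].
  - pose proof (coord_sq_le n x i Hi). rewrite H1 in H.
    unfold Rabs; destruct Rcase_abs; nra.
  - rewrite H2 by lia. rewrite Rabs_R0; lra.
Qed.

Lemma sphere_cluster n (x : nat -> point) : (forall k, on_sphere n (x k)) ->
  exists phi L, incr phi /\ on_sphere n L /\
    Un_cv (fun k => dot n (vsub (x (phi k)) L) (vsub (x (phi k)) L)) 0.
Proof.
  intros Hs.
  destruct (BWd (S n) x) as [phi [L [Hphi HL]]]; [intros; apply (sph_coord_bound n); auto|].
  set (L' := fun i => if Compare_dec.le_lt_dec i n then L i else 0).
  assert (HL': forall i, (i <= n)%nat -> Un_cv (fun k => x (phi k) i) (L' i)).
  { intros i Hi. unfold L'. destruct Compare_dec.le_lt_dec; [apply HL; lia| lia]. }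
  exists phi, L'. split; auto.
  assert (Hd: Un_cv (fun k => dot n (x (phi k)) (x (phi k))) (dot n L' L')) by
    (apply dot_cv; intros; split; auto).
  split; [split|].
  - apply (UL_sequence _ _ _ Hd). apply (Un_cv_ext (fun _ => 1)).
    + intro k. symmetry. apply (Hs (phi k)).
    + intros e He; exists O; intros; unfold R_dist; rewrite Rminus_diag, Rabs_R0; auto.
  - intros i Hi. unfold L'. destruct Compare_dec.le_lt_dec; [lia|auto].
  - replace 0 with (dot n (vsub L' L') (vsub L' L')).
    + apply dot_cv; intros i Hi; unfold vsub; split; apply CV_minus; auto;
      intros e He; exists O; intros; unfold R_dist; rewrite Rminus_diag, Rabs_R0; auto.
    + unfold vsub. rewrite dot_sub_l, !dot_sub_r. ring.
Qed.

Definition lipschitz n (f : point -> R) C := forall x y, Rabs (f x - f y) <= C * nrm n (vsub x y).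

Lemma chord_near_sdist n eps : 0 < eps -> exists eta, 0 < eta /\
  forall x y, on_sphere n x -> on_sphere n y -> dot n (vsub x y) (vsub x y) < eta -> sdist n x y < eps.
Proof.
  intros He. destruct (near1 eps He) as [c [Hc [Hc1 Hc2]]]. exists (2 * (1 - c)). split; [lra|].
  intros x y Hx Hy Hd. rewrite chord_sq in Hd by auto. unfold sdist. apply Hc2.
  apply sph_dot_bound; auto. lra.
Qed.

Lemma closed_limit n K (y : nat -> point) L : closed_sub n K -> on_sphere n L ->
  (forall k, K (y k)) -> Un_cv (fun k => dot n (vsub (y k) L) (vsub (y k) L)) 0 -> K L.
Proof.
  intros [HK1 HK2] HL Hy Hc. apply HK2; auto. intros eps He.
  destruct (chord_near_sdist n eps He) as [eta [Heta H]].
  destruct (Hc eta Heta) as [N HN]. specialize (HN N (le_n N)). unfold R_dist in HN.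
  rewrite Rminus_0_r in HN. exists (y N). split; auto. apply H; auto.
  assert (E: dot n (vsub L (y N)) (vsub L (y N)) = dot n (vsub (y N) L) (vsub (y N) L)).
  { rewrite !chord_sq by auto. rewrite dot_sym. auto. }
  rewrite E. pose proof (Rle_abs (dot n (vsub (y N) L) (vsub (y N) L))). lra.
Qed.

Lemma nrm_chord_le2 n x y : on_sphere n x -> on_sphere n y -> nrm n (vsub x y) <= 2.
Proof.
  intros. apply nrm_le_sq; [lra|]. rewrite chord_sq by auto.
  pose proof (sph_dot_bound n x y H H0). lra.
Qed.

Lemma max_lip n K f C : closed_sub n K -> (exists x, K x) -> 0 <= C -> lipschitz n f C ->
  exists y0, K y0 /\ forall y, K y -> f y <= f y0.
Proof.
  intros HK [y1 Hy1] HC Hf.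
  set (E := fun r => exists y, K y /\ r = f y).
  assert (Hb: bound E).
  { exists (f y1 + 2 * C). intros r [y [Hy ->]].
    pose proof (Hf y y1). pose proof (nrm_chord_le2 n y y1 (proj1 HK y Hy) (proj1 HK y1 Hy1)).
    pose proof (Rle_abs (f y - f y1)). nra. }
  destruct (completeness E Hb (ex_intro _ (f y1) (ex_intro _ y1 (conj Hy1 eq_refl)))) as [s [Hs1 Hs2]].
  assert (Hk: forall k : nat, exists y, K y /\ s - / (INR k + 1) < f y).
  { intro k. apply NNPP. intro Hn.
    assert (Hpos: 0 < / (INR k + 1)) by (apply Rinv_0_lt_compat; pose proof (pos_INR k); lra).
    assert (is_upper_bound E (s - / (INR k + 1))).
    { intros r [y [Hy ->]]. apply Rnot_lt_le. intro Hl. apply Hn. exists y; auto. }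
    specialize (Hs2 _ H). lra. }
  set (yk := fun k => proj1_sig (constructive_indefinite_description _ (Hk k))).
  assert (Hyk: forall k, K (yk k) /\ s - / (INR k + 1) < f (yk k)).
  { intro k; unfold yk; destruct constructive_indefinite_description; simpl; auto. }
  destruct (sphere_cluster n yk) as [phi [L [Hphi [HL Hc]]]].
  { intro k. apply (proj1 HK). apply Hyk. }
  assert (HKL: K L) by (apply (closed_limit n K (fun k => yk (phi k)) L); auto; intro; apply Hyk).
  exists L. split; auto.
  assert (HfL: s <= f L).
  { apply Rnot_lt_le. intro Hlt. set (g := s - f L).
    assert (Hg: 0 < g) by (unfold g; lra).
    destruct (archimed_cor1 (g / 2) ltac:(lra)) as [N2 [HN2 HN20]].
    assert (Heta: 0 < (g / (2 * C + 2)) * (g / (2 * C + 2))).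
    { assert (0 < g / (2 * C + 2)) by (apply Rdiv_lt_0_compat; lra). nra. }
    destruct (Hc _ Heta) as [N1 HN1].
    set (k := Nat.max N1 N2).
    specialize (HN1 k ltac:(unfold k; lia)). unfold R_dist in HN1. rewrite Rminus_0_r in HN1.
    pose proof (Rle_abs (dot n (vsub (yk (phi k)) L) (vsub (yk (phi k)) L))).
    assert (Hn: nrm n (vsub (yk (phi k)) L) < g / (2 * C + 2)).
    { apply nrm_lt_sq. apply Rlt_le, Rdiv_lt_0_compat; lra. lra. }
    pose proof (Hf (yk (phi k)) L). pose proof (Rle_abs (f (yk (phi k)) - f L)).
    pose proof (nrm_nonneg n (vsub (yk (phi k)) L)).
    assert (C * nrm n (vsub (yk (phi k)) L) < g / 2).
    { apply Rle_lt_trans with ((C + 1) * nrm n (vsub (yk (phi k)) L)); [nra|].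
      replace (g / 2) with ((C + 1) * (g / (2 * C + 2))) by (field; lra).
      apply Rmult_lt_compat_l; lra. }
    destruct (Hyk (phi k)) as [_ Hyk2].
    assert (/ (INR (phi k) + 1) <= / INR N2).
    { apply Rinv_le_contravar. apply lt_0_INR; lia.
      pose proof (incr_ge phi Hphi k). assert (HN2k: (N2 <= phi k)%nat) by (unfold k in *; lia).
      apply le_INR in HN2k. lra. }
    unfold g in *. lra. }
  intros y Hy. apply Rle_trans with s; auto. apply Hs1. exists y; auto.
Qed.

Lemma min_lip n K f C : closed_sub n K -> (exists x, K x) -> 0 <= C -> lipschitz n f C ->
  exists y0, K y0 /\ forall y, K y -> f y0 <= f y.
Proof.
  intros HK Hne HC Hf. destruct (max_lip n K (fun x => - f x) C HK Hne HC) as [y0 [H1 H2]].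
  - intros x y. replace (- f x - - f y) with (- (f x - f y)) by ring. rewrite Rabs_Ropp. apply Hf.
  - exists y0; split; auto. intros y Hy; specialize (H2 y Hy); lra.
Qed.

Lemma nrm_sphere n x : on_sphere n x -> nrm n x = 1.
Proof. intros [H _]. unfold nrm. rewrite H. apply sqrt_1. Qed.

Lemma lip_dot n x : lipschitz n (fun y => dot n x y) (nrm n x).
Proof.
  intros y y'. replace (dot n x y - dot n x y') with (dot n x (vsub y y')) by (unfold vsub; rewrite dot_sub_r; ring).
  apply abs_dot_le.
Qed.

Lemma ptmax_exists n B x : closed_sub n B -> (exists y, B y) ->
  exists y0, B y0 /\ forall y, B y -> dot n x y <= dot n x y0.
Proof. intros. apply (max_lip n B (fun y => dot n x y) (nrm n x)); auto. apply nrm_nonneg. apply lip_dot. Qed.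

Lemma one_side n A B c : closed_sub n A -> closed_sub n B -> (exists x, A x) -> (exists y, B y) ->
  -1 <= c <= 1 -> (forall x, A x -> exists y, B y /\ c <= dot n x y) ->
  exists r1, is_max (fun s => exists x, A x /\ pt_set_min n x B s) r1 /\ r1 <= acos c.
Proof.
  intros HA HB HAne HBne Hc Hxy.
  assert (Hg: forall x, exists y0, B y0 /\ forall y, B y -> dot n x y <= dot n x y0)
    by (intro; apply ptmax_exists; auto).
  set (g := fun x => proj1_sig (constructive_indefinite_description _ (Hg x))).
  assert (Hgp: forall x, B (g x) /\ forall y, B y -> dot n x y <= dot n x (g x)).
  { intro x; unfold g; destruct constructive_indefinite_description; simpl; auto. }
  set (M := fun x => dot n x (g x)).
  assert (HM: lipschitz n M 1).
  { intros x x'. unfold M.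
    destruct (Hgp x) as [Hx1 Hx2]. destruct (Hgp x') as [Hx1' Hx2'].
    pose proof (Hx2 (g x') Hx1'). pose proof (Hx2' (g x) Hx1).
    assert (E1: dot n x (g x) - dot n x' (g x) = dot n (vsub x x') (g x)) by (unfold vsub; rewrite dot_sub_l; ring).
    assert (E2: dot n x (g x') - dot n x' (g x') = dot n (vsub x x') (g x')) by (unfold vsub; rewrite dot_sub_l; ring).
    pose proof (abs_dot_le n (vsub x x') (g x)). pose proof (abs_dot_le n (vsub x x') (g x')).
    rewrite (nrm_sphere n (g x)) in H1 by (apply (proj1 HB); auto).
    rewrite (nrm_sphere n (g x')) in H2 by (apply (proj1 HB); auto).
    pose proof (Rle_abs (dot n (vsub x x') (g x))). pose proof (Rle_abs (- dot n (vsub x x') (g x'))).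
    rewrite Rabs_Ropp in H4.
    unfold Rabs at 1; destruct Rcase_abs; lra. }
  destruct (min_lip n A M 1 HA HAne ltac:(lra) HM) as [x0 [Hx0 Hmin]].
  assert (Hbnd: forall x, A x -> -1 <= M x <= 1).
  { intros x Hx. unfold M. apply sph_dot_bound; [apply (proj1 HA); auto| apply (proj1 HB); apply Hgp]. }
  assert (Hpt: forall x, A x -> pt_set_min n x B (acos (M x))).
  { intros x Hx. split.
    - exists (g x). split; [apply Hgp| reflexivity].
    - intros s [y [Hy ->]]. unfold sdist, M. apply acos_le_mono.
      + apply sph_dot_bound; [apply (proj1 HA); auto| apply (proj1 HB); auto].
      + apply Hgp; auto.
      + apply Hbnd; auto. }
  exists (acos (M x0)). split; [split|].
  - exists x0; split; auto.
  - intros s [x [Hx Hs]]. destruct Hs as [_ Hs2].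
    specialize (Hs2 (acos (M x))). assert (s <= acos (M x)) by (apply Hs2; exists (g x); split; [apply Hgp|reflexivity]).
    pose proof (Hmin x Hx). pose proof (Hbnd x Hx). pose proof (Hbnd x0 Hx0).
    assert (acos (M x) <= acos (M x0)) by (apply acos_le_mono; lra). lra.
  - destruct (Hxy x0 Hx0) as [y [Hy Hcy]]. pose proof (proj2 (Hgp x0) y Hy).
    pose proof (Hbnd x0 Hx0). apply acos_le_mono; unfold M in *; lra.
Qed.

Lemma hdist_bound n A B c : closed_sub n A -> closed_sub n B -> (exists x, A x) -> (exists y, B y) ->
  -1 <= c <= 1 -> (forall x, A x -> exists y, B y /\ c <= dot n x y) ->
  (forall y, B y -> exists x, A x /\ c <= dot n y x) ->
  exists r, hdist n A B r /\ r <= acos c.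
Proof.
  intros HA HB HAne HBne Hc H1 H2.
  destruct (one_side n A B c) as [r1 [Hr1 Hr1c]]; auto.
  destruct (one_side n B A c) as [r2 [Hr2 Hr2c]]; auto.
  exists (Rmax r1 r2). split. exists r1, r2; auto.
  unfold Rmax; destruct Rle_dec; lra.
Qed.

Definition comb (A B : point) t : point := fun i => (1 - t) * A i + t * B i.
Definition arcpt n (A B : point) t : point :=
  fun i => ((1 - t) * A i + t * B i) / vnorm n (fun j => (1 - t) * A j + t * B j).

Lemma vnorm_nrm n v : vnorm n v = nrm n v.
Proof. reflexivity. Qed.

Lemma comb_sq n A B t : on_sphere n A -> on_sphere n B ->
  dot n (comb A B t) (comb A B t) = 1 - 2 * t * (1 - t) * (1 - dot n A B).
Proof.
  intros [HA _] [HB _]. unfold comb. rewrite dot_lin, !dot_lin_r, HA, HB, (dot_sym n B A). ring.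
Qed.

Lemma comb_pos n A B t : on_sphere n A -> on_sphere n B -> -1 < dot n A B -> 0 <= t <= 1 ->
  0 < dot n (comb A B t) (comb A B t).
Proof.
  intros HA HB Hc Ht. rewrite comb_sq by auto. pose proof (sph_dot_bound n A B HA HB).
  assert (t * (1 - t) <= 1/4) by (pose proof (pow2_ge_0 (t - 1/2)); nra). assert (0 <= t * (1 - t)) by nra.
  assert (t * (1 - t) * (1 - dot n A B) <= 1/4 * (1 - dot n A B)) by (apply Rmult_le_compat_r; lra). lra.
Qed.

Lemma nrm_comb_le n A B t : on_sphere n A -> on_sphere n B -> 0 <= t <= 1 ->
  nrm n (comb A B t) <= 1 - t * (1 - t) * (1 - dot n A B).
Proof.
  intros HA HB Ht. pose proof (sph_dot_bound n A B HA HB).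
  assert (t * (1 - t) <= 1/4) by (pose proof (pow2_ge_0 (t - 1/2)); nra). assert (0 <= t * (1 - t)) by nra.
  assert (t * (1 - t) * (1 - dot n A B) <= 1/4 * (1 - dot n A B)) by (apply Rmult_le_compat_r; lra).
  apply nrm_le_sq; [lra|]. rewrite comb_sq by auto.
  set (p := t * (1 - t) * (1 - dot n A B)) in *.
  replace (1 - 2 * t * (1 - t) * (1 - dot n A B)) with (1 - 2 * p) by (unfold p; ring).
  pose proof (pow2_ge_0 p). nra.
Qed.

Lemma nrm_comb_le1 n A B t : on_sphere n A -> on_sphere n B -> 0 <= t <= 1 ->
  nrm n (comb A B t) <= 1.
Proof.
  intros. pose proof (nrm_comb_le n A B t H H0 H1). pose proof (sph_dot_bound n A B H H0).
  assert (0 <= t * (1 - t)) by nra. nra.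
Qed.

Lemma arcpt_eq n A B t : arcpt n A B t = fun i => / nrm n (comb A B t) * comb A B t i.
Proof. apply functional_extensionality; intro i. unfold arcpt, comb, Rdiv. rewrite vnorm_nrm. ring. Qed.

Lemma arcpt_dot n A B t Z : dot n (arcpt n A B t) Z = ((1 - t) * dot n A Z + t * dot n B Z) / nrm n (comb A B t).
Proof. rewrite arcpt_eq, dot_scal_l. unfold comb. rewrite dot_lin. unfold Rdiv. ring. Qed.

Lemma arcpt_sphere n A B t : on_sphere n A -> on_sphere n B -> -1 < dot n A B -> 0 <= t <= 1 ->
  on_sphere n (arcpt n A B t).
Proof.
  intros HA HB Hc Ht. pose proof (comb_pos n A B t HA HB Hc Ht) as Hp. split.
  - rewrite arcpt_eq, dot_scal_l, dot_scal_r.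
    assert (nrm n (comb A B t) * nrm n (comb A B t) = dot n (comb A B t) (comb A B t)) by apply nrm_sq.
    assert (0 < nrm n (comb A B t)) by (pose proof (nrm_nonneg n (comb A B t)); nra).
    rewrite <- H. field. lra.
  - intros i Hi. unfold arcpt. rewrite (proj2 HA i Hi), (proj2 HB i Hi). unfold Rdiv; ring.
Qed.

Lemma arc_iff n A B X : arc n A B X <-> exists t, 0 <= t <= 1 /\ X = arcpt n A B t.
Proof. reflexivity. Qed.

Definition arcclosed n (W : pset) := forall A B t, W A -> W B -> -1 < dot n A B -> 0 <= t <= 1 ->
  W (arcpt n A B t).

Lemma antipodal_dot n x w y : on_sphere n x -> on_sphere n w -> dot n x w = -1 ->
  dot n y w = - dot n y x.
Proof.
  intros Hx Hw Hc.
  assert (Hz: dot n (fun i => x i + w i) (fun i => x i + w i) = 0).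
  { rewrite dot_add_l, !(dot_sym n _ (fun i => x i + w i)), !dot_add_l. rewrite (proj1 Hx), (proj1 Hw), (dot_sym n w x). lra. }
  pose proof (cauchy_schwarz n y (fun i => x i + w i)). rewrite Hz in H.
  rewrite (dot_sym n y), dot_add_l, (dot_sym n x), (dot_sym n w) in H. nra.
Qed.

Lemma first_order n W y x0 : (forall w, W w -> on_sphere n w) -> arcclosed n W -> W x0 ->
  (forall w, W w -> dot n y w <= dot n y x0) -> 0 <= dot n y x0 ->
  forall w, W w -> dot n y w <= dot n y x0 * dot n x0 w.
Proof.
  intros Hs Ha Hx0 Hmax Hm w Hw. set (m := dot n y x0). set (c := dot n x0 w).
  pose proof (sph_dot_bound n x0 w (Hs x0 Hx0) (Hs w Hw)) as Hcb.
  destruct (Req_dec c (-1)) as [Hc|Hc].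
  - rewrite (antipodal_dot n x0 w y) by (auto; apply Hs; auto). unfold m; fold c; rewrite Hc; lra.
  - assert (Hc': -1 < c) by (fold c in Hcb; lra).
    assert (Hkey: forall t, 0 < t <= 1 -> dot n y w - m * c <= m * t * (1 - c)).
    { intros t Ht. assert (Ht': 0 <= t <= 1) by lra.
      pose proof (Ha x0 w t Hx0 Hw Hc' Ht') as Hwt.
      pose proof (Hmax _ Hwt) as Hle. rewrite dot_sym, arcpt_dot in Hle.
      pose proof (comb_pos n x0 w t (Hs x0 Hx0) (Hs w Hw) Hc' Ht') as Hp.
      assert (HN: 0 < nrm n (comb x0 w t)) by (pose proof (nrm_sq n (comb x0 w t)); pose proof (nrm_nonneg n (comb x0 w t)); nra).
      pose proof (nrm_comb_le n x0 w t (Hs x0 Hx0) (Hs w Hw) Ht') as HNl.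
      rewrite (dot_sym n x0 y), (dot_sym n w y) in Hle. fold m in Hle. fold c in HNl.
      apply (Rmult_le_compat_r (nrm n (comb x0 w t))) in Hle; [|lra].
      unfold Rdiv in Hle. rewrite Rmult_assoc, Rinv_l, Rmult_1_r in Hle by lra.
      assert (m * nrm n (comb x0 w t) <= m * (1 - t * (1 - t) * (1 - c))) by (apply Rmult_le_compat_l; auto).
      assert (t * (dot n y w - m * c) <= t * (m * t * (1 - c))) by nra.
      apply Rmult_le_reg_l with t; lra. }
    apply Rnot_lt_le. intro Hd. set (d := dot n y w - m * c) in *.
    assert (Hd0: 0 < d) by (unfold d; lra). assert (Hq: 0 <= m * (1 - c)) by (apply Rmult_le_pos; unfold m, c in *; lra).
    set (t := d / (d + m * (1 - c))).
    assert (Ht: 0 < t <= 1).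
    { unfold t. split. apply Rdiv_lt_0_compat; lra.
      apply Rmult_le_reg_r with (d + m * (1 - c)); [lra|]. unfold Rdiv. rewrite Rmult_assoc, Rinv_l by lra. lra. }
    specialize (Hkey t Ht).
    assert (m * t * (1 - c) < d).
    { unfold t. replace (m * (d / (d + m * (1 - c))) * (1 - c)) with (d * (m * (1 - c)) / (d + m * (1 - c))) by (field; lra).
      apply Rmult_lt_reg_r with (d + m * (1 - c)); [lra|]. unfold Rdiv. rewrite Rmult_assoc, Rinv_l by lra. nra. }
    lra.
Qed.

Definition epsA a := acos (1 - a * a / 2).

Lemma epsA_pos a : 0 < a <= 2 -> 0 < epsA a.
Proof. intros. unfold epsA. apply acos_pos_lt1. split; nra. Qed.

Lemma nrm_vsub_sq n x y : on_sphere n x -> on_sphere n y ->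
  nrm n (vsub x y) * nrm n (vsub x y) = 2 - 2 * dot n x y.
Proof. intros. rewrite nrm_sq. apply chord_sq; auto. Qed.

Lemma nrm_vsub_sym n x y : nrm n (vsub x y) = nrm n (vsub y x).
Proof. unfold nrm, vsub. f_equal. rewrite !dot_sub_l, !dot_sub_r. rewrite (dot_sym n x y). ring. Qed.

Lemma near_of_sdist n x y a : on_sphere n x -> on_sphere n y -> 0 < a <= 2 ->
  sdist n x y < epsA a -> nrm n (vsub x y) < a.
Proof.
  intros Hx Hy Ha Hs. unfold sdist, epsA in Hs.
  apply acos_lt_inv in Hs; [|apply sph_dot_bound; auto| split; nra].
  apply nrm_lt_sq; [lra|]. rewrite chord_sq by auto. lra.
Qed.

Lemma sdist_of_near n eps : 0 < eps -> exists a, 0 < a <= 2 /\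
  forall x y, on_sphere n x -> on_sphere n y -> nrm n (vsub x y) < a -> sdist n x y < eps.
Proof.
  intros He. destruct (chord_near_sdist n eps He) as [eta [Heta H]].
  exists (Rmin (sqrt eta) 2). split.
  - split; [|apply Rmin_r]. unfold Rmin; destruct Rle_dec; [apply sqrt_lt_R0|]; lra.
  - intros x y Hx Hy Hn. apply H; auto. rewrite <- nrm_sq.
    pose proof (nrm_nonneg n (vsub x y)). assert (nrm n (vsub x y) < sqrt eta) by
      (pose proof (Rmin_l (sqrt eta) 2); lra).
    pose proof (sqrt_sqrt eta ltac:(lra)). nra.
Qed.

Lemma nrm_tri3 n x y z : nrm n (vsub x z) <= nrm n (vsub x y) + nrm n (vsub y z).
Proof.
  replace (vsub x z) with (fun i => vsub x y i + vsub y z i) by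
    (apply functional_extensionality; intro; unfold vsub; ring). apply nrm_triangle.
Qed.

Lemma dot_diff_le n u x y : on_sphere n u -> Rabs (dot n u x - dot n u y) <= nrm n (vsub x y).
Proof.
  intros Hu. replace (dot n u x - dot n u y) with (dot n u (vsub x y)) by (unfold vsub; rewrite dot_sub_r; ring).
  pose proof (abs_dot_le n u (vsub x y)). rewrite nrm_sphere in H by auto. lra.
Qed.

Lemma ptmin_exists n B x : closed_sub n B -> (exists y, B y) -> on_sphere n x ->
  exists y0, B y0 /\ pt_set_min n x B (sdist n x y0).
Proof.
  intros HB Hne Hx. destruct (ptmax_exists n B x HB Hne) as [y0 [Hy0 Hmax]].
  exists y0. split; auto. split; [exists y0; auto|].
  intros s [y [Hy ->]]. unfold sdist. apply acos_le_mono; auto.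
  - apply sph_dot_bound; auto; apply (proj1 HB); auto.
  - apply sph_dot_bound; auto; apply (proj1 HB); auto.
Qed.

Lemma hd_near n V W r a : closed_sub n V -> closed_sub n W -> (exists x, V x) -> (exists x, W x) ->
  hdist n V W r -> 0 < a <= 2 -> r < epsA a ->
  (forall v, V v -> exists w, W w /\ nrm n (vsub v w) < a) /\
  (forall w, W w -> exists v, V v /\ nrm n (vsub w v) < a).
Proof.
  intros HV HW HVne HWne [r1 [r2 [[_ Hr1] [[_ Hr2] ->]]]] Ha Hr. split.
  - intros v Hv. destruct (ptmin_exists n W v HW HWne (proj1 HV v Hv)) as [w [Hw Hmin]].
    exists w; split; auto. apply near_of_sdist; auto; try apply (proj1 HV v Hv); try apply (proj1 HW w Hw).
    assert (sdist n v w <= r1) by (apply Hr1; exists v; auto). pose proof (Rmax_l r1 r2). lra.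
  - intros w Hw. destruct (ptmin_exists n V w HV HVne (proj1 HW w Hw)) as [v [Hv Hmin]].
    exists v; split; auto. apply near_of_sdist; auto; try apply (proj1 HV v Hv); try apply (proj1 HW w Hw).
    assert (sdist n w v <= r2) by (apply Hr2; exists w; auto). pose proof (Rmax_r r1 r2). lra.
Qed.

Definition normz n (u : point) : point := fun i => / nrm n u * u i.

Lemma normz_unit n u : 0 < nrm n u -> dot n (normz n u) (normz n u) = 1.
Proof.
  intros H. unfold normz. rewrite dot_scal_l, dot_scal_r, <- nrm_sq. field. lra.
Qed.

Lemma normz_close n u u' : 0 < nrm n u -> nrm n (vsub u' u) < nrm n u ->
  2 - 2 * dot n (normz n u) (normz n u') <= 4 * nrm n (vsub u' u) / nrm n u.
Proof.
  intros HN Hd. set (N := nrm n u) in *. set (N' := nrm n u'). set (d := nrm n (vsub u' u)) in *.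
  assert (Hd0: 0 <= d) by apply nrm_nonneg.
  assert (HN'1: N' <= N + d).
  { unfold N', N, d. replace u' with (fun i => u i + vsub u' u i) at 1 by
      (apply functional_extensionality; intro; unfold vsub; ring). apply nrm_triangle. }
  assert (HN'2: N <= N' + d).
  { unfold N', N, d. rewrite nrm_vsub_sym. replace u with (fun i => u' i + vsub u u' i) at 1 by
      (apply functional_extensionality; intro; unfold vsub; ring). apply nrm_triangle. }
  assert (HN'0: 0 < N') by lra.
  assert (Hdot: dot n (normz n u) (normz n u') = dot n u u' / (N * N')).
  { unfold normz. rewrite dot_scal_l, dot_scal_r. fold N N'. field; lra. }
  assert (Huu: N * N - N * d <= dot n u u').
  { replace u' with (fun i => u i + vsub u' u i) by (apply functional_extensionality; intro; unfold vsub; ring).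
    rewrite dot_sym, dot_add_l, (dot_sym n (vsub u' u)). unfold N. rewrite nrm_sq.
    pose proof (dot_ge_nrm n u (vsub u' u)). unfold d; lra. }
  rewrite Hdot.
  assert (dot n u u' / (N * N') >= (N - d) / (N + d)).
  { apply Rle_ge. unfold Rdiv.
    apply Rle_trans with ((N * N - N * d) * / (N * N')).
    - replace ((N * N - N * d) * / (N * N')) with ((N - d) * / N') by (field; lra).
      apply Rmult_le_compat_l; [lra|]. apply Rinv_le_contravar; lra.
    - apply Rmult_le_compat_r; auto. left; apply Rinv_0_lt_compat; nra. }
  assert (2 - 2 * ((N - d) / (N + d)) <= 4 * d / N).
  { replace (2 - 2 * ((N - d) / (N + d))) with (4 * d / (N + d)) by (field; lra).
    unfold Rdiv. apply Rmult_le_compat_l; [lra|]. apply Rinv_le_contravar; lra. }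
  lra.
Qed.

Lemma comb_diff_nrm n A B A' B' t : 0 <= t <= 1 ->
  nrm n (vsub (comb A' B' t) (comb A B t)) <= (1 - t) * nrm n (vsub A' A) + t * nrm n (vsub B' B).
Proof.
  intros Ht. replace (vsub (comb A' B' t) (comb A B t)) with
    (fun i => (fun j => (1 - t) * vsub A' A j) i + (fun j => t * vsub B' B j) i) by
    (apply functional_extensionality; intro; unfold vsub, comb; ring).
  eapply Rle_trans; [apply nrm_triangle|]. rewrite !nrm_scal, !Rabs_right by lra. lra.
Qed.

Lemma conv_lt a b s t : a < s -> b < s -> 0 <= t <= 1 -> (1 - t) * a + t * b < s.
Proof. intros. assert ((1 - t) * a <= (1 - t) * s) by (apply Rmult_le_compat_l; lra).
  assert (t * b <= t * s) by (apply Rmult_le_compat_l; lra).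
  destruct (Req_dec t 1); [subst; lra|]. assert ((1 - t) * a < (1 - t) * s) by (apply Rmult_lt_compat_l; lra). lra. Qed.

Lemma arc_cont n A B t b : on_sphere n A -> on_sphere n B -> -1 < dot n A B -> 0 <= t <= 1 -> 0 < b ->
  exists s, 0 < s <= 2 /\ forall A' B', on_sphere n (arcpt n A' B' t) ->
    nrm n (vsub A' A) < s -> nrm n (vsub B' B) < s ->
    nrm n (vsub (arcpt n A B t) (arcpt n A' B' t)) < b.
Proof.
  intros HA HB Hc Ht Hb.
  pose proof (comb_pos n A B t HA HB Hc Ht) as Hp.
  set (N := nrm n (comb A B t)).
  assert (HN: 0 < N) by (unfold N; pose proof (nrm_sq n (comb A B t)); pose proof (nrm_nonneg n (comb A B t)); nra).
  set (s := Rmin (Rmin (N / 2) (b * b * N / 8)) 2).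
  assert (Hs1: s <= N / 2) by (unfold s; pose proof (Rmin_l (Rmin (N / 2) (b * b * N / 8)) 2); pose proof (Rmin_l (N/2) (b * b * N / 8)); lra).
  assert (Hs2: s <= b * b * N / 8) by (unfold s; pose proof (Rmin_l (Rmin (N / 2) (b * b * N / 8)) 2); pose proof (Rmin_r (N/2) (b * b * N / 8)); lra).
  assert (Hs0: 0 < s).
  { unfold s, Rmin. assert (0 < b * b * N / 8) by (apply Rdiv_lt_0_compat; [apply Rmult_lt_0_compat; nra| lra]).
    repeat destruct Rle_dec; lra. }
  exists s. split; [split; [lra| apply Rmin_r]|].
  intros A' B' HX' HA' HB'.
  pose proof (comb_diff_nrm n A B A' B' t Ht) as Hd.
  assert (Hd2: nrm n (vsub (comb A' B' t) (comb A B t)) < s) by (pose proof (conv_lt _ _ s t HA' HB' Ht); lra).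
  rewrite !arcpt_eq. fold N.
  assert (HX: on_sphere n (arcpt n A B t)) by (apply arcpt_sphere; auto).
  rewrite !arcpt_eq in HX, HX'.
  pose proof (normz_close n (comb A B t) (comb A' B' t) HN ltac:(fold N; lra)) as Hcl.
  unfold normz in Hcl. fold N in Hcl.
  apply nrm_lt_sq; [lra|]. rewrite chord_sq by auto.
  assert (4 * nrm n (vsub (comb A' B' t) (comb A B t)) / N <= b * b / 2).
  { apply Rmult_le_reg_r with N; auto. unfold Rdiv. rewrite Rmult_assoc, Rinv_l, Rmult_1_r by lra. nra. }
  nra.
Qed.

Definition approx n W := forall eps, eps > 0 -> exists V r, H_sconv n V /\ hdist n V W r /\ r < eps.

Lemma Rmin_pos2 a b : 0 < a -> 0 < b -> 0 < Rmin a b.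
Proof. intros; unfold Rmin; destruct Rle_dec; lra. Qed.

Lemma lim_arcclosed n W : in_HS n W -> approx n W -> arcclosed n W.
Proof.
  intros [HWne HW] Hcl A B t HA HB Hc Ht.
  assert (HsA: on_sphere n A) by (apply (proj1 HW); auto).
  assert (HsB: on_sphere n B) by (apply (proj1 HW); auto).
  assert (HX: on_sphere n (arcpt n A B t)) by (apply arcpt_sphere; auto).
  apply (proj2 HW); auto. intros eps He.
  destruct (sdist_of_near n eps He) as [a0 [Ha0 Hnear]].
  destruct (arc_cont n A B t (a0 / 2) HsA HsB Hc Ht ltac:(lra)) as [s [Hs Hcont]].
  set (a := Rmin s (a0 / 2)).
  assert (Ha: 0 < a <= 2) by (split; [apply Rmin_pos2; lra| pose proof (Rmin_l s (a0/2)); unfold a; lra]).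
  assert (Has: a <= s) by apply Rmin_l. assert (Haa: a <= a0 / 2) by apply Rmin_r.
  destruct (Hcl (epsA a) (epsA_pos a Ha)) as [V [r [[HVne [HV HVc]] [Hd Hr]]]].
  destruct (hd_near n V W r a HV HW HVne HWne Hd Ha Hr) as [N1 N2].
  destruct (N2 A HA) as [A' [HA' HAA']]. destruct (N2 B HB) as [B' [HB' HBB']].
  set (X' := arcpt n A' B' t).
  assert (HVX': V X') by (apply (proj2 HVc A' B' HA' HB'); exists t; split; auto).
  destruct (N1 X' HVX') as [y [Hy HX'y]].
  exists y. split; auto. apply Hnear; auto. apply (proj1 HW); auto.
  pose proof (nrm_tri3 n (arcpt n A B t) X' y).
  assert (nrm n (vsub (arcpt n A B t) X') < a0 / 2).
  { apply Hcont. apply (proj1 HV); auto.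
    rewrite nrm_vsub_sym; lra. rewrite nrm_vsub_sym; lra. }
  lra.
Qed.

Lemma sconv_arcclosed n V : s_convex n V -> arcclosed n V.
Proof. intros [_ H] A B t HA HB _ Ht. apply (H A B HA HB). exists t; split; auto. Qed.

Lemma per_k n W : in_HS n W -> approx n W -> forall a, 0 < a <= 2 ->
  exists P, on_sphere n P /\ (exists w, W w /\ nrm n (vsub P w) < a) /\ (forall w, W w -> - a < dot n P w).
Proof.
  intros [HWne HW] Hcl a Ha.
  destruct (Hcl (epsA a) (epsA_pos a Ha)) as [V [r [[HVne [HV HVc]] [Hd Hr]]]].
  destruct (hd_near n V W r a HV HW HVne HWne Hd Ha Hr) as [N1 N2].
  destruct HVc as [[Q [HQ HQV]] HVa].
  set (y := opp Q).
  assert (Hpos: forall v, V v -> 0 < dot n y v).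
  { intros v Hv. unfold y. rewrite dot_opp_l. apply Ropp_0_gt_lt_contravar.
    apply Rnot_le_gt. intro Hle. apply (HQV v Hv). split; [apply (proj1 HV); auto| lra]. }
  destruct (ptmax_exists n V y HV HVne) as [P0 [HP0 Hmax]].
  pose proof (first_order n V y P0 (proj1 HV) (sconv_arcclosed n V (conj (ex_intro _ Q (conj HQ HQV)) HVa)) HP0 Hmax
    (Rlt_le _ _ (Hpos P0 HP0))) as Hfo.
  assert (HP0v: forall v, V v -> 0 < dot n P0 v).
  { intros v Hv. specialize (Hfo v Hv). pose proof (Hpos v Hv). pose proof (Hpos P0 HP0).
    apply Rnot_le_gt; intro. assert (dot n y P0 * dot n P0 v <= 0) by (apply Rmult_le_0_l_neg_r_pos || nra). nra. }
  exists P0. split; [apply (proj1 HV); auto|]. split.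
  - apply N1; auto.
  - intros w Hw. destruct (N2 w Hw) as [v [Hv Hwv]].
    pose proof (dot_diff_le n P0 w v (proj1 HV P0 HP0)). pose proof (HP0v v Hv).
    pose proof (Rabs_Ropp (dot n P0 w - dot n P0 v)). pose proof (Rle_abs (- (dot n P0 w - dot n P0 v))). lra.
Qed.

Lemma pick_k n (x : nat -> point) phi L b : incr phi -> 0 < b ->
  Un_cv (fun k => dot n (vsub (x (phi k)) L) (vsub (x (phi k)) L)) 0 ->
  exists k, nrm n (vsub (x (phi k)) L) < b /\ / (INR (phi k) + 1) < b.
Proof.
  intros Hphi Hb Hc. destruct (archimed_cor1 b Hb) as [N2 [HN2 HN20]].
  destruct (Hc (b * b) ltac:(nra)) as [N1 HN1].
  set (k := Nat.max N1 N2). exists k. split.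
  - specialize (HN1 k ltac:(unfold k; lia)). unfold R_dist in HN1. rewrite Rminus_0_r in HN1.
    apply nrm_lt_sq; [lra|]. pose proof (Rle_abs (dot n (vsub (x (phi k)) L) (vsub (x (phi k)) L))). lra.
  - assert (/ (INR (phi k) + 1) <= / INR N2); [|lra].
    apply Rinv_le_contravar. apply lt_0_INR; lia.
    pose proof (incr_ge phi Hphi k). assert (HN2k: (N2 <= phi k)%nat) by (unfold k in *; lia).
    apply le_INR in HN2k. lra.
Qed.

Lemma choose_P n W : in_HS n W -> approx n W -> exists P, W P /\ forall w, W w -> 0 <= dot n P w.
Proof.
  intros HWh Hcl. pose proof HWh as [HWne HW].
  assert (Hk: forall k : nat, exists P, on_sphere n P /\ (exists w, W w /\ nrm n (vsub P w) < / (INR k + 1)) /\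
     (forall w, W w -> - / (INR k + 1) < dot n P w)).
  { intro k. apply per_k; auto. assert (0 < / (INR k + 1)) by (apply Rinv_0_lt_compat; pose proof (pos_INR k); lra).
    split; auto. assert (1 <= INR k + 1) by (pose proof (pos_INR k); lra).
    assert (/ (INR k + 1) <= / 1) by (apply Rinv_le_contravar; lra). rewrite Rinv_1 in H1. lra. }
  set (Pk := fun k => proj1_sig (constructive_indefinite_description _ (Hk k))).
  assert (HPk: forall k, on_sphere n (Pk k) /\ (exists w, W w /\ nrm n (vsub (Pk k) w) < / (INR k + 1)) /\
     (forall w, W w -> - / (INR k + 1) < dot n (Pk k) w)).
  { intro k; unfold Pk; destruct constructive_indefinite_description; simpl; auto. }
  destruct (sphere_cluster n Pk) as [phi [P [Hphi [HP Hc]]]]; [intro; apply HPk|].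
  exists P. split.
  - apply (proj2 HW); auto. intros eps He.
    destruct (sdist_of_near n eps He) as [a0 [Ha0 Hnear]].
    destruct (pick_k n Pk phi P (a0 / 2) Hphi ltac:(lra) Hc) as [k [Hk1 Hk2]].
    destruct (HPk (phi k)) as [Hs [[w [Hw Hpw]] _]].
    exists w. split; auto. apply Hnear; auto. apply (proj1 HW); auto.
    pose proof (nrm_tri3 n P (Pk (phi k)) w). rewrite nrm_vsub_sym in Hk1. lra.
  - intros w Hw. apply Rnot_lt_le. intro Hneg. set (g := - dot n P w).
    destruct (pick_k n Pk phi P (g / 2) Hphi ltac:(unfold g; lra) Hc) as [k [Hk1 Hk2]].
    destruct (HPk (phi k)) as [Hs [_ Hall]]. specialize (Hall w Hw).
    assert (Hws: on_sphere n w) by (apply (proj1 HW); auto).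
    pose proof (dot_diff_le n w (Pk (phi k)) P Hws). rewrite !(dot_sym n w) in H.
    pose proof (Rle_abs (dot n (Pk (phi k)) w - dot n P w)). unfold g in *. lra.
Qed.

Definition Vw n (W : pset) P c : pset := fun x => on_sphere n x /\ 1 - c <= dot n P x /\
  forall u, dot n u u <= 1 -> (forall w, W w -> 0 <= dot n u w) -> 0 <= dot n u x + (1 - c * c) * dot n P x.

Section Wulff.
Variables (n : nat) (W : pset) (P : point) (c : R).
Hypothesis HW : closed_sub n W.
Hypothesis HWP : W P.
Hypothesis HPpos : forall w, W w -> 0 <= dot n P w.
Hypothesis Harc : arcclosed n W.
Hypothesis Hc : 0 < c < 1.

Let HPs : on_sphere n P := proj1 HW P HWP.

Lemma nrm_le1 u : dot n u u <= 1 -> nrm n u <= 1.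
Proof. intros. apply nrm_le_sq; lra. Qed.

Lemma Vw_closed : closed_sub n (Vw n W P c).
Proof.
  split; [intros x [Hx _]; auto|]. intros x Hx Hap. split; [auto|]. split.
  - apply Rnot_lt_le. intro Hlt. set (g := 1 - c - dot n P x).
    set (b := Rmin g 2). assert (Hb: 0 < b <= 2) by (split; [apply Rmin_pos2; unfold g; lra| apply Rmin_r]).
    destruct (Hap (epsA b) (epsA_pos b Hb)) as [y [[Hy [Hy1 _]] Hxy]].
    pose proof (near_of_sdist n x y b Hx Hy Hb Hxy). pose proof (dot_diff_le n P x y HPs).
    pose proof (Rmin_l g 2). pose proof (Rle_abs (- (dot n P x - dot n P y))). rewrite Rabs_Ropp in H2. unfold b, g in *. lra.
  - intros u Hu HuW. apply Rnot_lt_le. intro Hlt.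
    set (g := - (dot n u x + (1 - c * c) * dot n P x)).
    set (b := Rmin (g / 2) 2). assert (Hb: 0 < b <= 2) by (split; [apply Rmin_pos2; unfold g; lra| apply Rmin_r]).
    destruct (Hap (epsA b) (epsA_pos b Hb)) as [y [[Hy [_ Hy2]] Hxy]].
    specialize (Hy2 u Hu HuW).
    pose proof (near_of_sdist n x y b Hx Hy Hb Hxy) as Hn. pose proof (dot_diff_le n P x y HPs).
    pose proof (abs_dot_le n u (vsub x y)). pose proof (nrm_le1 u Hu). pose proof (nrm_nonneg n (vsub x y)).
    assert (E: dot n u x - dot n u y = dot n u (vsub x y)) by (unfold vsub; rewrite dot_sub_r; ring).
    pose proof (Rle_abs (dot n u (vsub x y))). pose proof (Rle_abs (- dot n u (vsub x y))). rewrite Rabs_Ropp in H4.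
    pose proof (Rle_abs (dot n P x - dot n P y)). pose proof (Rle_abs (- (dot n P x - dot n P y))). rewrite Rabs_Ropp in H6.
    pose proof (Rmin_l (g / 2) 2).
    assert (0 <= 1 - c * c <= 1) by nra.
    assert (nrm n u * nrm n (vsub x y) <= nrm n (vsub x y)) by nra.
    assert ((1 - c * c) * Rabs (dot n P x - dot n P y) <= nrm n (vsub x y)) by nra.
    assert (Rabs ((1 - c * c) * (dot n P x - dot n P y)) <= nrm n (vsub x y)) by (rewrite Rabs_mult, Rabs_right by lra; lra).
    pose proof (Rle_abs ((1 - c * c) * (dot n P x - dot n P y))).
    pose proof (Rle_abs (- ((1 - c * c) * (dot n P x - dot n P y)))). rewrite Rabs_Ropp in H13.
    unfold b, g in *. lra.
Qed.

Lemma Vw_P : Vw n W P c P.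
Proof.
  split; auto. split; [rewrite (proj1 HPs); lra|]. intros u _ HuW. specialize (HuW P HWP).
  rewrite (proj1 HPs). nra.
Qed.

Lemma Vw_interior : interior_point n (Vw n W P c) P.
Proof.
  split; [apply Vw_P|]. set (d := 1 - c * c). assert (Hd: 0 < d < 1) by (unfold d; nra).
  set (a := Rmin (d / 2) c). assert (Ha: 0 < a <= 2) by (split; [apply Rmin_pos2; lra| pose proof (Rmin_r (d/2) c); unfold a; lra]).
  assert (Ha1: a <= d / 2) by apply Rmin_l. assert (Ha2: a <= c) by apply Rmin_r.
  exists (epsA a). split; [apply Rlt_gt, epsA_pos; auto|]. intros Q HQ Hd'.
  pose proof (near_of_sdist n P Q a HPs HQ Ha Hd') as Hn.
  pose proof (nrm_vsub_sq n P Q HPs HQ). pose proof (nrm_nonneg n (vsub P Q)).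
  assert (HPQ: 1 - a * a / 2 < dot n P Q) by nra.
  split; auto. split; [nra|].
  intros u Hu HuW. specialize (HuW P HWP).
  assert (E: dot n u Q = dot n u P - dot n u (vsub P Q)) by (unfold vsub; rewrite dot_sub_r; ring).
  pose proof (dot_le_nrm n u (vsub P Q)). pose proof (nrm_le1 u Hu). pose proof (nrm_nonneg n u).
  assert (nrm n u * nrm n (vsub P Q) <= a) by nra. fold d. nra.
Qed.

Lemma Vw_arc A B X : Vw n W P c A -> Vw n W P c B -> arc n A B X -> Vw n W P c X.
Proof.
  intros [HA [HA1 HA2]] [HB [HB1 HB2]] [t [Ht ->]]. fold (arcpt n A B t).
  assert (Hab: -1 < dot n A B).
  { pose proof (sph_dot_bound n A B HA HB). destruct (Req_dec (dot n A B) (-1)) as [E|]; [|lra].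
    rewrite (antipodal_dot n A B P HA HB E) in HB1. lra. }
  pose proof (comb_pos n A B t HA HB Hab Ht) as Hp.
  assert (HN: 0 < nrm n (comb A B t)) by (pose proof (nrm_sq n (comb A B t)); pose proof (nrm_nonneg n (comb A B t)); nra).
  pose proof (nrm_comb_le1 n A B t HA HB Ht) as HN1.
  split; [apply arcpt_sphere; auto|]. split.
  - rewrite dot_sym, arcpt_dot, (dot_sym n A), (dot_sym n B).
    apply Rle_trans with ((1 - t) * dot n P A + t * dot n P B); [nra|].
    apply Rmult_le_reg_r with (nrm n (comb A B t)); auto. unfold Rdiv.
    rewrite Rmult_assoc, Rinv_l, Rmult_1_r by lra. assert (0 <= (1 - t) * dot n P A + t * dot n P B) by nra. nra.
  - intros u Hu HuW. specialize (HA2 u Hu HuW). specialize (HB2 u Hu HuW).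
    rewrite !(dot_sym n _ (arcpt n A B t)), !arcpt_dot.
    replace (((1 - t) * dot n A u + t * dot n B u) / nrm n (comb A B t) +
      (1 - c * c) * (((1 - t) * dot n A P + t * dot n B P) / nrm n (comb A B t))) with
      (((1 - t) * (dot n u A + (1 - c * c) * dot n P A) + t * (dot n u B + (1 - c * c) * dot n P B)) / nrm n (comb A B t))
      by (rewrite !(dot_sym n u), !(dot_sym n P); field; lra).
    unfold Rdiv. apply Rmult_le_pos; [nra| left; apply Rinv_0_lt_compat; auto].
Qed.

Lemma Vw_not_half x : Vw n W P c x -> ~ Hhalf n (opp P) x.
Proof. intros [_ [H1 _]] [_ H2]. rewrite dot_opp_l in H2. lra. Qed.

Lemma opp_sphere : on_sphere n (opp P).
Proof.
  split.
  - rewrite dot_opp_l, dot_sym, dot_opp_l, (proj1 HPs). ring.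
  - intros i Hi. unfold opp. rewrite (proj2 HPs i Hi). ring.
Qed.

Lemma Vw_Wulff : H_Wulff n P (Vw n W P c).
Proof.
  split; [split; [exists P; apply Vw_P| apply Vw_closed]|].
  split; [apply Vw_not_half|]. split; [apply Vw_interior|].
  split; [split|split; [apply Vw_closed| exists P; apply Vw_interior]].
  - exists (opp P). split; [apply opp_sphere| apply Vw_not_half].
  - intros A B HA HB X HX. apply (Vw_arc A B X); auto.
Qed.

Lemma Vw_near1 x : Vw n W P c x -> exists w, W w /\ c <= dot n x w.
Proof.
  intros [Hx [Hx1 Hx2]]. destruct (ptmax_exists n W x HW (ex_intro _ P HWP)) as [w0 [Hw0 Hmax]].
  exists w0. split; auto. set (m := dot n x w0).
  pose proof (sph_dot_bound n P x HPs Hx).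
  destruct (Rle_lt_dec m 0) as [Hm|Hm].
  - exfalso. specialize (Hx2 (opp x)).
    assert (E1: dot n (opp x) (opp x) = 1) by (rewrite dot_opp_l, dot_sym, dot_opp_l, (proj1 Hx); ring).
    assert (E2: dot n (opp x) x = -1) by (rewrite dot_opp_l, (proj1 Hx); ring).
    rewrite E1, E2 in Hx2.
    assert (forall w, W w -> 0 <= dot n (opp x) w) as Hu.
    { intros w Hw. rewrite dot_opp_l. specialize (Hmax w Hw). fold m in Hmax. lra. }
    specialize (Hx2 ltac:(lra) Hu). assert (0 < 1 - c * c <= 1) by nra. assert ((1 - c * c) * dot n P x <= (1 - c * c) * 1) by (apply Rmult_le_compat_l; lra). nra.
  - set (u := fun i => m * w0 i - x i).
    pose proof (first_order n W x w0 (proj1 HW) Harc Hw0 Hmax ltac:(fold m; lra)) as Hfo. fold m in Hfo.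
    assert (Hw0s: on_sphere n w0) by (apply (proj1 HW); auto).
    assert (Huu: dot n u u = 1 - m * m).
    { unfold u. replace (fun i => m * w0 i - x i) with (fun i => m * w0 i + (-1) * x i) by
        (apply functional_extensionality; intro; ring).
      rewrite dot_lin, !dot_lin_r, (proj1 Hx), (proj1 Hw0s), (dot_sym n w0 x). fold m. ring. }
    assert (HuW: forall w, W w -> 0 <= dot n u w).
    { intros w Hw. unfold u. replace (fun i => m * w0 i - x i) with (fun i => m * w0 i + (-1) * x i) by
        (apply functional_extensionality; intro; ring). rewrite dot_lin. specialize (Hfo w Hw). lra. }
    assert (Hux: dot n u x = m * m - 1).
    { unfold u. replace (fun i => m * w0 i - x i) with (fun i => m * w0 i + (-1) * x i) by
        (apply functional_extensionality; intro; ring). rewrite dot_lin, (proj1 Hx), (dot_sym n w0 x). fold m. ring. }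
    specialize (Hx2 u ltac:(nra) HuW). rewrite Hux in Hx2.
    assert (0 < 1 - c * c <= 1) by nra. assert ((1 - c * c) * dot n P x <= (1 - c * c) * 1) by (apply Rmult_le_compat_l; lra). assert (c * c <= m * m) by nra. nra.
Qed.

Lemma Vw_near2 w : W w -> exists x, Vw n W P c x /\ c <= dot n w x.
Proof.
  intros Hw. assert (Hws: on_sphere n w) by (apply (proj1 HW); auto).
  set (t := 1 - c). assert (Ht: 0 <= t <= 1) by (unfold t; lra).
  pose proof (HPpos w Hw) as HPw.
  assert (Hc': -1 < dot n w P) by (rewrite dot_sym; lra).
  set (x := arcpt n w P t). assert (HWx: W x) by (apply Harc; auto).
  pose proof (comb_pos n w P t Hws HPs Hc' Ht) as Hp.
  assert (HN: 0 < nrm n (comb w P t)) by (pose proof (nrm_sq n (comb w P t)); pose proof (nrm_nonneg n (comb w P t)); nra).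
  pose proof (nrm_comb_le1 n w P t Hws HPs Ht) as HN1.
  assert (HPx: t <= dot n P x).
  { unfold x. rewrite dot_sym, arcpt_dot, (proj1 HPs), (dot_sym n w P).
    apply Rmult_le_reg_r with (nrm n (comb w P t)); auto. unfold Rdiv.
    rewrite Rmult_assoc, Rinv_l, Rmult_1_r by lra. assert (0 <= (1 - t) * dot n P w) by (apply Rmult_le_pos; lra). nra. }
  exists x. split; [split; [apply (proj1 HW); auto| split; [unfold t in HPx; lra|]]|].
  - intros u Hu HuW. specialize (HuW x HWx). assert (0 <= 1 - c * c) by nra. nra.
  - unfold x. rewrite dot_sym, arcpt_dot, (proj1 Hws). rewrite dot_sym in HPw.
    apply Rmult_le_reg_r with (nrm n (comb w P t)); auto. unfold Rdiv.
    rewrite Rmult_assoc, Rinv_l, Rmult_1_r by lra. assert (0 <= t * dot n w P) by (apply Rmult_le_pos; lra).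
    rewrite (dot_sym n P w). unfold t in *. assert (c * nrm n (comb w P (1 - c)) <= c * 1) by (apply Rmult_le_compat_l; lra). lra.
Qed.

Lemma Vw_hdist : exists r, hdist n (Vw n W P c) W r /\ r <= acos c.
Proof.
  apply hdist_bound; auto.
  - apply Vw_closed.
  - exists P; apply Vw_P.
  - exists P; auto.
  - split; lra.
  - apply Vw_near1.
  - apply Vw_near2.
Qed.

End Wulff.
Theorem proposition3 (n : nat) (hn : (1 <= n)%nat) (W : pset) :
  (exists P, on_sphere n P /\ hclosure n (H_Wulff n P) W) <->
  hclosure n (H_sconv n) W.
Proof.
  split.
  - intros [P [HP [HWin Hcl]]]. split; auto. intros eps He.
    destruct (Hcl eps He) as [V [r [HV [Hd Hr]]]]. exists V, r. split; [|auto].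
    destruct HV as [[Hne Hcl'] [_ [_ [Hsc _]]]]. split; auto.
  - intros [HWin Happ].
    assert (Hap: approx n W) by exact Happ.
    destruct (choose_P n W HWin Hap) as [P [HWP HPpos]].
    pose proof (lim_arcclosed n W HWin Hap) as Harc.
    destruct HWin as [HWne HW].
    exists P. split; [apply (proj1 HW); auto|]. split; [split; auto|].
    intros eps He. destruct (near1 eps He) as [c [Hc [Hc1 _]]].
    destruct (Vw_hdist n W P c HW HWP HPpos Harc Hc) as [r [Hr1 Hr2]].
    exists (Vw n W P c), r. split; [|split; [auto| lra]].
    apply Vw_Wulff; auto.
Qed.
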